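(* Normal form bisimilarity is included in contextual equivalence: for all terms $t_0,t_1$ of $\lambda_{\mathcal S}$, if $t_0 \sim t_1$ then $t_0 \simeq_{\mathrm{ctx}} t_1$.
   Context: The calculus $\lambda_{\mathcal S}$ (call-by-value $\lambda$-calculus with shift and reset). Terms: $t ::= x \mid \lambda x.t \mid t\,t \mid \mathcal{S}k.t \mid \langle t\rangle$; values: $v ::= \lambda x.t \mid x$. $\lambda x.t$ binds $x$ in $t$ and $\mathcal{S}k.t$ binds $k$ in $t$; terms are identified up to $\alpha$-conversion; $\mathrm{fv}(t)$ is the set of free variables; $t\{v/x\}$ is capture-avoiding substitution. Pure contexts: $F ::= [\,] \mid v\,F \mid F\,t$. Evaluation contexts: $E ::= [\,] \mid v\,E \mid E\,t \mid \langle E\rangle$. General contexts: $C ::= [\,] \mid \lambda x.C \mid t\,C \mid C\,t \mid \mathcal{S}k.C \mid \langle C\rangle$; $C[t]$ is hole-filling (free variables of $t$ may be captured). Reduction $\to$: $E[(\lambda x.t)\,v] \to E[t\{v/x\}]$; $E[\langle F[\mathcal{S}k.t]\rangle] \to E[\langle t\{\lambda x.\langle F[x]\rangle/k\}\rangle]$ with $x\notin\mathrm{fv}(F)$; $E[\langle v\rangle]\to E[v]$. $\to^*$ is the reflexive-transitive closure, and $t \Downarrow t'$ means $t\to^* t'$ and $t'$ is irreducible. A term is stuck if it is not a value and is irreducible; a normal form is a value or a stuck term. Control stuck terms are those of the form $F[\mathcal{S}k.t]$; open stuck terms are those of the form $E[x\,v]$. A variable is fresh if it does not occur free in the terms/contexts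 under consideration. Contextual equivalence: $t_0 \simeq_{\mathrm{ctx}} t_1$ iff for every context $C$ such that $C[t_0]$ and $C[t_1]$ are closed, (i) $C[t_0]\Downarrow v_0$ for a value $v_0$ implies $C[t_1]\Downarrow v_1$ for some value $v_1$; (ii) $C[t_0]\Downarrow t_0'$ with $t_0'$ control stuck implies $C[t_1]\Downarrow t_1'$ with $t_1'$ control stuck; and symmetrically with $t_0,t_1$ exchanged. Normal form bisimilarity. Given a relation $\mathcal R$ on terms, extend it to evaluation contexts: $E_0 \mathrel{\mathcal R} E_1$ iff either $E_0 = E_0'[\langle F_0\rangle]$, $E_1 = E_1'[\langle F_1\rangle]$ with $F_0,F_1$ pure, $E_0'[x]\mathrel{\mathcal R}E_1'[x]$ and $\langle F_0[x]\rangle \mathrel{\mathcal R}\langle F_1[x]\rangle$ for a fresh $x$; or $E_0=F_0$, $E_1=F_1$ are pure and $F_0[x]\mathrel{\mathcal R}F_1[x]$ for a fresh $x$. Define $v\mathbin{@}y$ as $x\,y$ if $v=x$ and as $t\{y/x\}$ if $v=\lambda x.t$. Define $\mathcal R^{\mathrm{nf}}$ on normal forms inductively: $v_0 \mathrel{\mathcal R^{\mathrm{nf}}} v_1$ if $v_0\mathbin{@}x \mathrel{\mathcal R} v_1\mathbin{@}x$ for a fresh $x$; $F_0[\mathcal{S}k.t_0] \mathrel{\mathcal R^{\mathrm{nf}}} F_1[\mathcal{S}k.t_1]$ if $F_0\mathrel{\mathcal R}F_1$ and $\langle t_0\rangle\mathrel{\mathcal R}\langle t_1\rangle$; $E_0[x\,v_0]\mathrel{\mathcal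 R^{\mathrm{nf}}}E_1[x\,v_1]$ if $E_0\mathrel{\mathcal R}E_1$ and $v_0\mathrel{\mathcal R^{\mathrm{nf}}}v_1$. $\mathcal R$ is a normal form simulation if $t_0\mathrel{\mathcal R}t_1$ and $t_0\Downarrow t_0'$ imply $t_1\Downarrow t_1'$ for some $t_1'$ with $t_0'\mathrel{\mathcal R^{\mathrm{nf}}}t_1'$; it is a normal form bisimulation if both $\mathcal R$ and its inverse are normal form simulations. Normal form bisimilarity $\sim$ is the largest normal form bisimulation. *)

(* Defs.v *)
(* The calculus lambda_S (CBV lambda-calculus with shift/reset)
   with terms represented by de Bruijn indices (terms up to alpha-conversion). *)
From Stdlib Require Import Relations.

Inductive term : Type :=
| Var   : nat -> term
| Lam   : term -> term
| App   : term -> term -> term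
| Shift : term -> term            (* S k. t, binds index 0 (k) in t *)
| Reset : term -> term.

Definition is_val (t : term) : Prop :=
  match t with Var _ | Lam _ => True | _ => False end.

Definition upren (xi : nat -> nat) (n : nat) : nat :=
  match n with 0 => 0 | S m => S (xi m) end.

Fixpoint ren (xi : nat -> nat) (t : term) : term :=
  match t with
  | Var n => Var (xi n)
  | Lam t => Lam (ren (upren xi) t)
  | App t u => App (ren xi t) (ren xi u)
  | Shift t => Shift (ren (upren xi) t)
  | Reset t => Reset (ren xi t)
  end.

Definition up (s : nat -> term) (n : nat) : term :=
  match n with 0 => Var 0 | S m => ren S (s m) end.

Fixpoint subst (s : nat -> term) (t : term) : term :=
  match t with
  | Var n => s n
  | Lam t => Lam (subst (up s) t)
  | App t u => App (subst s t) (subst s u)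
  | Shift t => Shift (subst (up s) t)
  | Reset t => Reset (subst s t)
  end.

(** [t{v/x}] where x is the variable bound by the enclosing binder (index 0) *)
Definition beta (v : term) (n : nat) : term :=
  match n with 0 => v | S m => Var m end.

Definition subst1 (v t : term) : term := subst (beta v) t.

Fixpoint closed_at (n : nat) (t : term) : Prop :=
  match t with
  | Var m => m < n
  | Lam t => closed_at (S n) t
  | App t u => closed_at n t /\ closed_at n u
  | Shift t => closed_at (S n) t
  | Reset t => closed_at n t
  end.

Definition closed (t : term) : Prop := closed_at 0 t.

Inductive ectx : Type :=
| EHole : ectx
| EAppR : term -> ectx -> ectx
| EAppL : ectx -> term -> ectx
| EReset : ectx -> ectx.

Fixpoint plug (E : ectx) (t : term) : term :=
  match E with
  | EHole => t
  | EAppR v E => App v (plug E t)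
  | EAppL E u => App (plug E t) u
  | EReset E => Reset (plug E t)
  end.

Fixpoint ectx_ok (E : ectx) : Prop :=
  match E with
  | EHole => True
  | EAppR v E => is_val v /\ ectx_ok E
  | EAppL E _ => ectx_ok E
  | EReset E => ectx_ok E
  end.

Fixpoint no_reset (E : ectx) : Prop :=
  match E with
  | EHole => True
  | EAppR _ E => no_reset E
  | EAppL E _ => no_reset E
  | EReset _ => False
  end.

Definition ectx_eval (E : ectx) : Prop := ectx_ok E.
Definition ectx_pure (F : ectx) : Prop := ectx_ok F /\ no_reset F.

Fixpoint ecomp (E1 E2 : ectx) : ectx :=
  match E1 with
  | EHole => E2
  | EAppR v E => EAppR v (ecomp E E2)
  | EAppL E u => EAppL (ecomp E E2) u
  | EReset E => EReset (ecomp E E2)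
  end.

Fixpoint eren (xi : nat -> nat) (E : ectx) : ectx :=
  match E with
  | EHole => EHole
  | EAppR v E => EAppR (ren xi v) (eren xi E)
  | EAppL E u => EAppL (eren xi E) (ren xi u)
  | EReset E => EReset (eren xi E)
  end.

(** [E[x]] for a fresh variable x: shift the free variables of E by one and
    use index 0 as the fresh variable. *)
Definition plug_fresh (E : ectx) : term := plug (eren S E) (Var 0).

Inductive step : term -> term -> Prop :=
| step_beta : forall E t v, ectx_eval E -> is_val v ->
    step (plug E (App (Lam t) v)) (plug E (subst1 v t))
| step_shift : forall E F t, ectx_eval E -> ectx_pure F ->
    step (plug E (Reset (plug F (Shift t))))
         (plug E (Reset (subst1 (Lam (Reset (plug_fresh F))) t)))
| step_reset : forall E v, ectx_eval E -> is_val v ->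
    step (plug E (Reset v)) (plug E v).

Definition steps : term -> term -> Prop := clos_refl_trans term step.

Definition irreducible (t : term) : Prop := forall u, ~ step t u.

Definition evals (t t' : term) : Prop := steps t t' /\ irreducible t'.

Definition stuck (t : term) : Prop := ~ is_val t /\ irreducible t.
Definition normal_form (t : term) : Prop := is_val t \/ stuck t.

Definition control_stuck (t : term) : Prop :=
  exists F s, ectx_pure F /\ t = plug F (Shift s).

Definition open_stuck (t : term) : Prop :=
  exists E x v, ectx_eval E /\ is_val v /\ t = plug E (App (Var x) v).

Inductive gctx : Type :=
| CHole : gctx
| CLam : gctx -> gctx
| CAppR : term -> gctx -> gctx
| CAppL : gctx -> term -> gctx
| CShift : gctx -> gctx
| CReset : gctx -> gctx.

(** hole filling; with de Bruijn indices, free variables of the plugged term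
    are captured by the binders of the context *)
Fixpoint cplug (C : gctx) (t : term) : term :=
  match C with
  | CHole => t
  | CLam C => Lam (cplug C t)
  | CAppR u C => App u (cplug C t)
  | CAppL C u => App (cplug C t) u
  | CShift C => Shift (cplug C t)
  | CReset C => Reset (cplug C t)
  end.

Definition ctx_approx (t0 t1 : term) : Prop :=
  forall C, closed (cplug C t0) -> closed (cplug C t1) ->
    ((exists v0, evals (cplug C t0) v0 /\ is_val v0) ->
       exists v1, evals (cplug C t1) v1 /\ is_val v1) /\
    ((exists u0, evals (cplug C t0) u0 /\ control_stuck u0) ->
       exists u1, evals (cplug C t1) u1 /\ control_stuck u1).

Definition ctx_equiv (t0 t1 : term) : Prop :=
  ctx_approx t0 t1 /\ ctx_approx t1 t0.

Definition ectx_rel (R : term -> term -> Prop) (E0 E1 : ectx) : Prop :=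
  (exists E0' F0 E1' F1,
      ectx_eval E0' /\ ectx_pure F0 /\ ectx_eval E1' /\ ectx_pure F1 /\
      E0 = ecomp E0' (EReset F0) /\ E1 = ecomp E1' (EReset F1) /\
      R (plug_fresh E0') (plug_fresh E1') /\
      R (Reset (plug_fresh F0)) (Reset (plug_fresh F1)))
  \/
  (ectx_pure E0 /\ ectx_pure E1 /\ R (plug_fresh E0) (plug_fresh E1)).

(** v @ x for a fresh x (index 0 after shifting the free variables of v) *)
Definition app_fresh (v : term) : term :=
  match v with
  | Lam t => t
  | t => App (ren S t) (Var 0)
  end.

Inductive nf_rel (R : term -> term -> Prop) : term -> term -> Prop :=
| nf_val : forall v0 v1, is_val v0 -> is_val v1 ->
    R (app_fresh v0) (app_fresh v1) -> nf_rel R v0 v1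
| nf_ctrl : forall F0 F1 t0 t1, ectx_pure F0 -> ectx_pure F1 ->
    ectx_rel R F0 F1 -> R (Reset t0) (Reset t1) ->
    nf_rel R (plug F0 (Shift t0)) (plug F1 (Shift t1))
| nf_open : forall E0 E1 x v0 v1, ectx_eval E0 -> ectx_eval E1 ->
    is_val v0 -> is_val v1 ->
    ectx_rel R E0 E1 -> nf_rel R v0 v1 ->
    nf_rel R (plug E0 (App (Var x) v0)) (plug E1 (App (Var x) v1)).

Definition nf_simulation (R : term -> term -> Prop) : Prop :=
  forall t0 t1, R t0 t1 -> forall t0', evals t0 t0' ->
    exists t1', evals t1 t1' /\ nf_rel R t0' t1'.

Definition nf_bisimulation (R : term -> term -> Prop) : Prop :=
  nf_simulation R /\ nf_simulation (fun t1 t0 => R t0 t1).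

Definition nf_bisim (t0 t1 : term) : Prop :=
  exists R, nf_bisimulation R /\ R t0 t1.

(* Main.v *)
Require Import Defs.
From Stdlib Require Import Lia Arith PeanoNat Relations Classical.

(** * Substitution algebra *)

Definition scons (v : term) (s : nat -> term) (n : nat) : term :=
  match n with 0 => v | S m => s m end.

Lemma ren_ext : forall t xi zeta, (forall n, xi n = zeta n) -> ren xi t = ren zeta t.
Proof.
  induction t; intros xi zeta H; simpl; f_equal; auto;
  try (apply IHt; intros [|n]; simpl; auto).
Qed.

Lemma subst_ext : forall t s s', (forall n, s n = s' n) -> subst s t = subst s' t.
Proof.
  induction t; intros s s' H; simpl; f_equal; auto;
  try (apply IHt; intros [|n]; simpl; auto; rewrite H; auto).
Qed.

Lemma ren_ren : forall t xi zeta, ren xi (ren zeta t) = ren (fun n => xi (zeta n)) t.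
Proof.
  induction t; intros xi zeta; simpl; f_equal; auto;
  rewrite IHt; apply ren_ext; intros [|n]; reflexivity.
Qed.

Lemma ren_subst : forall t xi s, ren xi (subst s t) = subst (fun n => ren xi (s n)) t.
Proof.
  induction t; intros xi s; simpl; f_equal; auto;
  rewrite IHt; apply subst_ext; intros [|n]; simpl; auto;
  rewrite !ren_ren; apply ren_ext; intros; reflexivity.
Qed.

Lemma subst_ren : forall t xi s, subst s (ren xi t) = subst (fun n => s (xi n)) t.
Proof.
  induction t; intros xi s; simpl; f_equal; auto;
  rewrite IHt; apply subst_ext; intros [|n]; simpl; auto.
Qed.

Lemma subst_subst : forall t s1 s2, subst s2 (subst s1 t) = subst (fun n => subst s2 (s1 n)) t.
Proof.
  induction t; intros s1 s2; simpl; f_equal; auto;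
  rewrite IHt; apply subst_ext; intros [|n]; simpl; auto;
  rewrite subst_ren, ren_subst; apply subst_ext; intros; reflexivity.
Qed.

Lemma subst_id : forall t, subst Var t = t.
Proof.
  induction t; simpl; f_equal; auto;
  rewrite <- IHt at 2; apply subst_ext; intros [|n]; reflexivity.
Qed.

Lemma subst1_ren : forall p t, subst1 p (ren S t) = t.
Proof.
  intros; unfold subst1; rewrite subst_ren; rewrite <- (subst_id t) at 2;
  apply subst_ext; intros; reflexivity.
Qed.

Lemma subst1_up : forall p s a, subst1 p (subst (up s) a) = subst (scons p s) a.
Proof.
  intros; unfold subst1; rewrite subst_subst; apply subst_ext; intros [|n]; simpl; auto.
  apply subst1_ren.
Qed.

Lemma subst_subst1 : forall s v t, subst s (subst1 v t) = subst1 (subst s v) (subst (up s) t).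
Proof.
  intros; rewrite subst1_up; unfold subst1; rewrite subst_subst;
  apply subst_ext; intros [|n]; reflexivity.
Qed.

Fixpoint esubst (s : nat -> term) (E : ectx) : ectx :=
  match E with
  | EHole => EHole
  | EAppR v E => EAppR (subst s v) (esubst s E)
  | EAppL E u => EAppL (esubst s E) (subst s u)
  | EReset E => EReset (esubst s E)
  end.

Lemma plug_subst : forall s E t, subst s (plug E t) = plug (esubst s E) (subst s t).
Proof. induction E; intros; simpl; f_equal; auto. Qed.

Lemma esubst_ext : forall E s s', (forall n, s n = s' n) -> esubst s E = esubst s' E.
Proof. induction E; intros; simpl; f_equal; auto; apply subst_ext; auto. Qed.

Lemma esubst_eren : forall E s xi, esubst s (eren xi E) = esubst (fun n => s (xi n)) E.
Proof. induction E; intros; simpl; f_equal; auto; apply subst_ren. Qed.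

Lemma eren_esubst : forall E xi s, eren xi (esubst s E) = esubst (fun n => ren xi (s n)) E.
Proof. induction E; intros; simpl; f_equal; auto; apply ren_subst. Qed.

Lemma esubst_id : forall E, esubst Var E = E.
Proof. induction E; simpl; f_equal; auto; apply subst_id. Qed.

Lemma plug_ecomp : forall E1 E2 t, plug (ecomp E1 E2) t = plug E1 (plug E2 t).
Proof. induction E1; intros; simpl; f_equal; auto. Qed.

Lemma esubst_ecomp : forall s E1 E2, esubst s (ecomp E1 E2) = ecomp (esubst s E1) (esubst s E2).
Proof. induction E1; intros; simpl; f_equal; auto. Qed.

Lemma subst_up_pf : forall s F, subst (up s) (plug_fresh F) = plug_fresh (esubst s F).
Proof.
  intros; unfold plug_fresh; rewrite plug_subst; simpl; f_equal.
  rewrite esubst_eren, eren_esubst; apply esubst_ext; intros; reflexivity.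
Qed.

Lemma subst_scons_pf : forall v s F, subst (scons v s) (plug_fresh F) = plug (esubst s F) v.
Proof.
  intros; unfold plug_fresh; rewrite plug_subst; simpl; f_equal.
  rewrite esubst_eren; apply esubst_ext; intros; reflexivity.
Qed.

Lemma subst1_pf : forall v F, subst1 v (plug_fresh F) = plug F v.
Proof.
  intros; unfold subst1; change (beta v) with (scons v Var).
  rewrite subst_scons_pf, esubst_id; reflexivity.
Qed.

Definition vsub (s : nat -> term) := forall n, is_val (s n).

Lemma val_subst : forall s v, vsub s -> is_val v -> is_val (subst s v).
Proof. intros s [] Hs Hv; simpl in *; auto; contradiction. Qed.

Lemma ok_esubst : forall s E, vsub s -> ectx_ok E -> ectx_ok (esubst s E).
Proof. induction E; simpl; intros; intuition; apply val_subst; auto. Qed.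

Lemma nr_esubst : forall s E, no_reset E -> no_reset (esubst s E).
Proof. induction E; simpl; intros; intuition. Qed.

Lemma pure_esubst : forall s E, vsub s -> ectx_pure E -> ectx_pure (esubst s E).
Proof. unfold ectx_pure; intros; intuition; auto using ok_esubst, nr_esubst. Qed.

Lemma ok_ecomp : forall E1 E2, ectx_ok E1 -> ectx_ok E2 -> ectx_ok (ecomp E1 E2).
Proof. induction E1; simpl; intros; intuition. Qed.

Lemma pure_ecomp : forall E1 E2, ectx_pure E1 -> ectx_pure E2 -> ectx_pure (ecomp E1 E2).
Proof.
  unfold ectx_pure; induction E1; simpl; intros; intuition;
  try (apply ok_ecomp); auto; try (apply IHE1; auto).
Qed.

Lemma vsub_scons : forall v s, is_val v -> vsub s -> vsub (scons v s).
Proof. intros v s Hv Hs [|n]; simpl; auto. Qed.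

(** * Structural steps *)
Inductive sstep : term -> term -> Prop :=
| ss_beta : forall t v, is_val v -> sstep (App (Lam t) v) (subst1 v t)
| ss_shift : forall F t, ectx_pure F ->
    sstep (Reset (plug F (Shift t))) (Reset (subst1 (Lam (Reset (plug_fresh F))) t))
| ss_reset : forall v, is_val v -> sstep (Reset v) v
| ss_appL : forall t t' u, sstep t t' -> sstep (App t u) (App t' u)
| ss_appR : forall v t t', is_val v -> sstep t t' -> sstep (App v t) (App v t')
| ss_resetc : forall t t', sstep t t' -> sstep (Reset t) (Reset t').

Lemma sstep_plug : forall E t t', ectx_ok E -> sstep t t' -> sstep (plug E t) (plug E t').
Proof.
  intros E; induction E; simpl; intros t1 t2 HE H; intuition.
  - apply ss_appR; auto.
  - apply ss_appL; auto.
  - apply ss_resetc; auto.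
Qed.

Lemma step_sstep : forall t u, step t u -> sstep t u.
Proof.
  intros t u H; destruct H; apply sstep_plug; auto; constructor; auto.
Qed.

Lemma sstep_step : forall t u, sstep t u -> step t u.
Proof.
  intros t u H; induction H.
  - exact (step_beta EHole t v I H).
  - exact (step_shift EHole F t I H).
  - exact (step_reset EHole v I H).
  - destruct IHsstep as [E t0 v HE Hv | E F t0 HE HF | E v HE Hv].
    + exact (step_beta (EAppL E u) t0 v HE Hv).
    + exact (step_shift (EAppL E u) F t0 HE HF).
    + exact (step_reset (EAppL E u) v HE Hv).
  - destruct IHsstep as [E t0 v0 HE Hv | E F t0 HE HF | E v0 HE Hv].
    + exact (step_beta (EAppR v E) t0 v0 (conj H HE) Hv).
    + exact (step_shift (EAppR v E) F t0 (conj H HE) HF).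
    + exact (step_reset (EAppR v E) v0 (conj H HE) Hv).
  - destruct IHsstep as [E t0 v HE Hv | E F t0 HE HF | E v HE Hv].
    + exact (step_beta (EReset E) t0 v HE Hv).
    + exact (step_shift (EReset E) F t0 HE HF).
    + exact (step_reset (EReset E) v HE Hv).
Qed.

Lemma val_nstep : forall v u, is_val v -> ~ sstep v u.
Proof. intros v u Hv H; destruct v; simpl in Hv; try contradiction; inversion H. Qed.

Lemma plug_shift_not_val : forall F t, ~ is_val (plug F (Shift t)).
Proof. destruct F; simpl; auto. Qed.

Lemma plug_app_not_val : forall E a b, ~ is_val (plug E (App a b)).
Proof. destruct E; simpl; auto. Qed.

Lemma cs_nstep : forall F t u, ectx_pure F -> ~ sstep (plug F (Shift t)) u.
Proof.
  unfold ectx_pure; induction F; simpl; intros t0 u [Hok Hnr] H.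
  - inversion H.
  - inversion H; subst.
    + eapply plug_shift_not_val; eauto.
    + eapply val_nstep; [apply Hok|]; eauto.
    + eapply IHF; eauto; intuition.
  - inversion H; subst.
    + destruct F; simpl in *; discriminate.
    + eapply IHF; eauto.
    + eapply plug_shift_not_val; eauto.
  - contradiction.
Qed.

Ltac split_ands := repeat match goal with H : _ /\ _ |- _ => destruct H end.

Lemma shift_decomp : forall F F' t t', ectx_pure F -> ectx_pure F' ->
  plug F (Shift t) = plug F' (Shift t') -> F = F' /\ t = t'.
Proof.
  unfold ectx_pure; intros F; induction F; intros F' a a' HF HF' Heq; destruct F'; simpl in *;
    try discriminate; try contradiction;
  injection Heq; intros; subst; split_ands; auto;
  try (exfalso; match goal with H : is_val (plug ?F (Shift ?t)) |- _ => exact (plug_shift_not_val F t H) end);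
  try (destruct (IHF F' a a'); intuition; subst; auto; fail).
Qed.

Lemma sstep_det : forall t u, sstep t u -> forall u', sstep t u' -> u = u'.
Proof.
  intros t u H; induction H; intros u' H'; inversion H'; subst; auto;
  try (exfalso; eapply val_nstep; [|eassumption]; simpl; auto; fail);
  try (exfalso; eapply val_nstep; [eassumption|]; eassumption);
  try (exfalso; eapply cs_nstep; [|eassumption]; eassumption);
  try (exfalso; eapply plug_shift_not_val; eassumption);
  try (f_equal; auto; fail).
  - destruct (shift_decomp F0 F t0 t); auto; subst; auto.
  - exfalso; match goal with Hs: sstep (Lam _) _ |- _ => inversion Hs end.
Qed.

Inductive nsteps : nat -> term -> term -> Prop :=
| ns0 : forall t, nsteps 0 t t
| nsS : forall n t u w, sstep t u -> nsteps n u w -> nsteps (S n) t w.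

Definition irr (t : term) := forall u, ~ sstep t u.

Lemma nsteps_trans : forall n m t u w, nsteps n t u -> nsteps m u w -> nsteps (n + m) t w.
Proof. induction 1; intros; simpl; auto; econstructor; eauto. Qed.

Lemma nsteps_one : forall t u, sstep t u -> nsteps 1 t u.
Proof. intros; econstructor; eauto; constructor. Qed.

Lemma nsteps_plug : forall E n t u, ectx_ok E -> nsteps n t u -> nsteps n (plug E t) (plug E u).
Proof. induction 2; econstructor; eauto using sstep_plug. Qed.

Lemma sstep_subst : forall s t u, vsub s -> sstep t u -> sstep (subst s t) (subst s u).
Proof.
  intros s t u Hs H; induction H; simpl.
  - rewrite subst_subst1; apply ss_beta; apply val_subst; auto.
  - rewrite plug_subst; simpl. rewrite subst_subst1; simpl.
    rewrite subst_up_pf. apply ss_shift; apply pure_esubst; auto.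
  - apply ss_reset; apply val_subst; auto.
  - apply ss_appL; auto.
  - apply ss_appR; auto; apply val_subst; auto.
  - apply ss_resetc; auto.
Qed.

Lemma nsteps_subst : forall s n t u, vsub s -> nsteps n t u -> nsteps n (subst s t) (subst s u).
Proof. induction 2; econstructor; eauto using sstep_subst. Qed.

Lemma nsteps_det_irr : forall m t w, nsteps m t w -> forall n v, nsteps n t v -> irr v ->
  m <= n /\ nsteps (n - m) w v.
Proof.
  induction 1; intros n0 v Hn Hv.
  - split; [lia|]. replace (n0 - 0) with n0 by lia; auto.
  - inversion Hn; subst.
    + exfalso; eapply Hv; eauto.
    + assert (u = u0) by (eapply sstep_det; eauto). subst.
      destruct (IHnsteps _ _ H2 Hv). split; [lia|]. simpl; auto.
Qed.

Lemma steps_nsteps : forall t u, steps t u -> exists n, nsteps n t u.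
Proof.
  intros t u H; apply clos_rt_rt1n in H; induction H.
  - exists 0; constructor.
  - destruct IHclos_refl_trans_1n as [n Hn]; exists (S n); econstructor; eauto using step_sstep.
Qed.

Lemma nsteps_steps : forall n t u, nsteps n t u -> steps t u.
Proof.
  induction 1.
  - apply rt_refl.
  - eapply rt_trans; [apply rt_step; apply sstep_step; eauto| auto].
Qed.

Lemma irr_irreducible : forall t, irr t -> irreducible t.
Proof. intros t H u Hs; apply (H u); apply step_sstep; auto. Qed.

Lemma irreducible_irr : forall t, irreducible t -> irr t.
Proof. intros t H u Hs; apply (H u); apply sstep_step; auto. Qed.

Lemma cs_irr : forall q, control_stuck q -> irr q.
Proof. intros q [F [s [HF ->]]] u; apply cs_nstep; auto. Qed.

Lemma cs_not_val : forall q, control_stuck q -> ~ is_val q.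
Proof. intros q [F [s [HF ->]]]; apply plug_shift_not_val. Qed.

Lemma val_irr : forall v, is_val v -> irr v.
Proof. intros v Hv u; apply val_nstep; auto. Qed.

Lemma val_not_cs : forall v, is_val v -> ~ control_stuck v.
Proof. intros v Hv Hc; eapply cs_not_val; eauto. Qed.

Lemma plug_shift_not_var : forall F t n, plug F (Shift t) <> Var n.
Proof. destruct F; simpl; discriminate. Qed.

Lemma plug_app_not_var : forall E a b n, plug E (App a b) <> Var n.
Proof. destruct E; simpl; discriminate. Qed.

Lemma open_not_cs : forall E x v F s, ectx_ok E -> is_val v -> ectx_pure F ->
  plug E (App (Var x) v) <> plug F (Shift s).
Proof.
  unfold ectx_pure; intros E; induction E; intros x v0 F s0 HE Hv [HF HF'] Heq; destruct F; simpl in *;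
  try discriminate; try contradiction; injection Heq; intros; subst; split_ands;
  try (match goal with H : plug E _ = plug _ _ |- _ => refine (IHE _ _ _ _ _ _ _ H); [assumption | assumption | split; assumption] end);
  try (match goal with H : is_val (plug ?F (Shift ?t)) |- _ => exact (plug_shift_not_val F t H) end);
  try (match goal with H : is_val (plug ?F (App ?a ?b)) |- _ => exact (plug_app_not_val F a b H) end);
  try (match goal with H : Var _ = plug ?F (Shift ?t) |- _ => symmetry in H; exact (plug_shift_not_var _ _ _ H) end).
Qed.

Lemma open_irr : forall E x v, ectx_ok E -> is_val v -> irr (plug E (App (Var x) v)).
Proof.
  intros E; induction E; intros x v0 HE Hv u Hs; simpl in *; split_ands;
  inversion Hs; subst;
  try (match goal with H : sstep ?a _, H' : is_val ?a |- _ => exact (val_nstep _ _ H' H) end);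
  try (match goal with H : sstep (Var _) _ |- _ => inversion H end);
  try (match goal with H : is_val (plug ?F (App ?a ?b)) |- _ => exact (plug_app_not_val F a b H) end);
  try (match goal with H : sstep (plug E _) _ |- _ => refine (IHE _ _ _ Hv _ H); assumption end);
  try (match goal with H : Lam _ = plug E _ |- _ => destruct E; discriminate end);
  try (match goal with H : plug E _ = plug _ _ |- _ => eapply open_not_cs; [ | | | exact H]; eauto end);
  try (match goal with H : plug _ _ = plug E _ |- _ => symmetry in H; eapply open_not_cs; [ | | | exact H]; eauto end).
Qed.

Lemma open_not_cs' : forall E x v, ectx_ok E -> is_val v -> ~ control_stuck (plug E (App (Var x) v)).
Proof. intros E x v HE Hv [F [s [HF Heq]]]; eapply open_not_cs; eauto. Qed.

Definition Obs (k : nat) (t0 t1 : term) : Prop :=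
  forall i n0, i <= k -> nsteps i t0 n0 -> irr n0 -> (is_val n0 \/ control_stuck n0) ->
  exists n1 i1, nsteps i1 t1 n1 /\ irr n1 /\ (is_val n0 -> is_val n1) /\
    (control_stuck n0 -> control_stuck n1).

Lemma Obs_anti : forall k j t0 t1, j <= k -> Obs k t0 t1 -> Obs j t0 t1.
Proof. unfold Obs; intros k j t0 t1 Hjk HO i n0 Hi Hs Hirr Hv; apply (HO i n0); auto; lia. Qed.

Lemma Obs_lsteps : forall m t0 t0' t1 j, nsteps m t0 t0' ->
  (m <= j -> Obs (j - m) t0' t1) -> Obs j t0 t1.
Proof.
  unfold Obs; intros m t0 t0' t1 j Hm HO i n0 Hi Hs Hirr Hv.
  destruct (nsteps_det_irr _ _ _ Hm _ _ Hs Hirr) as [Hmi Hs'].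
  apply (HO ltac:(lia) (i - m) n0); auto; lia.
Qed.

Lemma Obs_lstep : forall t0 t0' t1 j, sstep t0 t0' -> Obs j t0' t1 -> Obs (S j) t0 t1.
Proof.
  intros; eapply Obs_lsteps; [apply nsteps_one; eauto|]. intros; replace (S j - 1) with j by lia; auto.
Qed.

Lemma Obs_lstep0 : forall t0 t0' t1 j, sstep t0 t0' -> (forall j', j = S j' -> Obs j' t0' t1) -> Obs j t0 t1.
Proof.
  intros; eapply Obs_lsteps; [apply nsteps_one; eauto|]. intros; destruct j; [lia|].
  replace (S j - 1) with j by lia; auto.
Qed.

Lemma Obs_rsteps : forall m t0 t1 t1' k, nsteps m t1 t1' -> Obs k t0 t1' -> Obs k t0 t1.
Proof.
  unfold Obs; intros. destruct (H0 i n0) as [n1 [i1 [A B]]]; auto.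
  exists n1, (m + i1); split; auto; eapply nsteps_trans; eauto.
Qed.

Lemma Obs_stuck : forall k t0 t1, irr t0 -> ~ is_val t0 -> ~ control_stuck t0 -> Obs k t0 t1.
Proof.
  unfold Obs; intros k t0 t1 Hirr0 Hnv Hncs i n0 Hi Hs Hirr Hv. inversion Hs; subst.
  - destruct Hv; contradiction.
  - exfalso; match goal with H' : sstep _ _ |- _ => exact (Hirr0 _ H') end.
Qed.

Lemma Obs_val : forall k v0 v1, is_val v0 -> is_val v1 -> Obs k v0 v1.
Proof.
  unfold Obs; intros k v0 v1 H0 H1 i n0 Hi Hs Hirr Hv. inversion Hs; subst.
  - exists v1, 0; split; [constructor|]; split; [apply val_irr; auto|]; split; auto.
    intros Hc; exfalso; exact (val_not_cs _ H0 Hc).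
  - exfalso; match goal with H : sstep _ _ |- _ => exact (val_irr _ H0 _ H) end.
Qed.

Lemma Obs_cs : forall k q0 q1, control_stuck q0 -> control_stuck q1 -> Obs k q0 q1.
Proof.
  unfold Obs; intros k q0 q1 H0 H1 i n0 Hi Hs Hirr Hv. inversion Hs; subst.
  - exists q1, 0; split; [constructor|]; split; [apply cs_irr; auto|]; split; auto.
    intros Hc; exfalso; exact (cs_not_val _ H0 Hc).
  - exfalso; match goal with H : sstep _ _ |- _ => exact (cs_irr _ H0 _ H) end.
Qed.

Lemma Obs_open : forall k E x v t1, ectx_ok E -> is_val v -> Obs k (plug E (App (Var x) v)) t1.
Proof.
  intros; apply Obs_stuck; auto using open_irr, open_not_cs'; apply plug_app_not_val.
Qed.

(** * Step-indexed logical relation *)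
Definition reduct (v p : term) : term :=
  match v with Lam t => subst1 p t | _ => App v p end.

Section Rels.
Variable W : nat -> term -> term -> Prop.

Definition VKg (j : nat) (N0 N1 : ectx) : Prop :=
  ectx_ok N0 /\ ectx_ok N1 /\
  forall i w0 w1, i <= j -> W i w0 w1 -> Obs i (plug N0 w0) (plug N1 w1).

Definition TKg (j : nat) (F0 F1 : ectx) : Prop :=
  ectx_pure F0 /\ ectx_pure F1 /\
  forall i w0 w1, i <= j -> W i w0 w1 -> Obs i (plug F0 w0) (plug F1 w1).

Definition ERg (j : nat) (X0 X1 : term) : Prop :=
  forall i N0 N1, i <= j -> VKg i N0 N1 -> Obs i (plug N0 X0) (plug N1 X1).

Definition PCg (j : nat) (F0 F1 : ectx) : Prop :=
  ectx_pure F0 /\ ectx_pure F1 /\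
  forall i w0 w1, i <= j -> W i w0 w1 -> ERg i (Reset (plug F0 w0)) (Reset (plug F1 w1)).

Definition Eg (k : nat) (t0 t1 : term) : Prop :=
  forall j, j <= k ->
  (forall F0 F1, TKg j F0 F1 -> Obs j (plug F0 t0) (plug F1 t1)) /\
  (forall N0 N1 F0 F1, VKg j N0 N1 -> PCg j F0 F1 ->
     Obs j (plug N0 (Reset (plug F0 t0))) (plug N1 (Reset (plug F1 t1)))).

Definition Vbody (k : nat) (v0 v1 : term) : Prop :=
  is_val v0 /\ is_val v1 /\
  forall j p0 p1, j < k -> W j p0 p1 -> Eg j (reduct v0 p0) (App v1 p1).
End Rels.

Definition agree (W W' : nat -> term -> term -> Prop) (k : nat) :=
  forall i a b, i <= k -> (W i a b <-> W' i a b).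

Lemma agree_sym : forall W W' k, agree W W' k -> agree W' W k.
Proof. unfold agree; intros; split; apply H; auto. Qed.

Lemma agree_le : forall W W' k j, agree W W' k -> j <= k -> agree W W' j.
Proof. unfold agree; intros; apply H; lia. Qed.

Lemma VK_tr : forall W W' k N0 N1, agree W W' k -> VKg W k N0 N1 -> VKg W' k N0 N1.
Proof.
  unfold VKg; intros W W' k N0 N1 Ha [A [B C]]; split; auto; split; auto.
  intros; apply C; auto; apply Ha; auto.
Qed.

Lemma TK_tr : forall W W' k N0 N1, agree W W' k -> TKg W k N0 N1 -> TKg W' k N0 N1.
Proof.
  unfold TKg; intros W W' k N0 N1 Ha [A [B C]]; split; auto; split; auto.
  intros; apply C; auto; apply Ha; auto.
Qed.

Lemma ER_tr : forall W W' k X0 X1, agree W W' k -> ERg W k X0 X1 -> ERg W' k X0 X1.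
Proof.
  unfold ERg; intros W W' k X0 X1 Ha H i N0 N1 Hi HV.
  apply H; auto. apply (VK_tr W' W); auto. apply agree_sym; eapply agree_le; eauto.
Qed.

Lemma PC_tr : forall W W' k N0 N1, agree W W' k -> PCg W k N0 N1 -> PCg W' k N0 N1.
Proof.
  unfold PCg; intros W W' k N0 N1 Ha [A [B C]]; split; auto; split; auto.
  intros. apply (ER_tr W W'). eapply agree_le; eauto. apply C; auto; apply Ha; auto.
Qed.

Lemma E_tr : forall W W' k t0 t1, agree W W' k -> Eg W k t0 t1 -> Eg W' k t0 t1.
Proof.
  unfold Eg; intros W W' k t0 t1 Ha H j Hj. destruct (H j Hj) as [H1 H2]; split.
  - intros; apply H1. apply (TK_tr W' W); auto. apply agree_sym; eapply agree_le; eauto.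
  - intros; apply H2.
    + apply (VK_tr W' W); auto. apply agree_sym; eapply agree_le; eauto.
    + apply (PC_tr W' W); auto. apply agree_sym; eapply agree_le; eauto.
Qed.

Fixpoint Vup (k : nat) : nat -> term -> term -> Prop :=
  match k with
  | 0 => fun _ => Vbody (fun _ _ _ => False) 0
  | S k' => fun j => if Nat.leb j k' then Vup k' j else Vbody (Vup k') (S k')
  end.

Definition V (j : nat) : term -> term -> Prop := Vup j j.

Lemma Vup_eq : forall k j a b, j <= k -> (Vup k j a b <-> V j a b).
Proof.
  induction k; intros j a b Hj.
  - assert (j = 0) by lia; subst; unfold V; tauto.
  - simpl. destruct (Nat.leb j k) eqn:E.
    + apply Nat.leb_le in E. apply IHk; auto.
    + apply Nat.leb_gt in E. assert (j = S k) by lia; subst. unfold V; cbn [Vup].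
      rewrite (proj2 (Nat.leb_gt (S k) k) (Nat.lt_succ_diag_r k)). tauto.
Qed.

Lemma V_S : forall k a b, V (S k) a b <-> Vbody (Vup k) (S k) a b.
Proof.
  intros; unfold V; cbn [Vup].
  rewrite (proj2 (Nat.leb_gt (S k) k) (Nat.lt_succ_diag_r k)). tauto.
Qed.

Notation E := (Eg V).
Notation VK := (VKg V).
Notation TK := (TKg V).
Notation ER := (ERg V).
Notation PC := (PCg V).

Lemma V_unfold : forall k v0 v1, V k v0 v1 <->
  is_val v0 /\ is_val v1 /\ forall j p0 p1, j < k -> V j p0 p1 -> E j (reduct v0 p0) (App v1 p1).
Proof.
  intros [|k] v0 v1.
  - unfold V; simpl; unfold Vbody; split; intros [A [B C]]; split; auto; split; auto; intros; lia.
  - rewrite V_S; unfold Vbody; split; intros [A [B C]]; split; auto; split; auto.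
    + intros j0 p0 p1 Hj HV.
      apply (E_tr (Vup k) V).
      * intros i a b Hi; apply Vup_eq; lia.
      * apply C; [lia|]. apply (Vup_eq k); [lia|]; auto.
    + intros j0 p0 p1 Hj HV.
      apply (E_tr V (Vup k)).
      * intros i a b Hi; split; apply Vup_eq; lia.
      * apply C; [lia|]. apply (Vup_eq k); [lia|]; auto.
Qed.

Lemma V_val : forall k v0 v1, V k v0 v1 -> is_val v0 /\ is_val v1.
Proof. intros; apply V_unfold in H; tauto. Qed.

Lemma V_anti : forall k j v0 v1, j <= k -> V k v0 v1 -> V j v0 v1.
Proof.
  intros k j v0 v1 Hj H; apply V_unfold in H; apply V_unfold; destruct H as [A [B C]].
  split; auto; split; auto. intros j0 p0 p1 Hj0 HV; apply C; auto; lia.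
Qed.

Lemma VK_anti : forall k j N0 N1, j <= k -> VK k N0 N1 -> VK j N0 N1.
Proof. unfold VKg; intros k j N0 N1 Hj [A [B C]]; split; auto; split; auto; intros; apply C; auto; lia. Qed.

Lemma TK_anti : forall k j N0 N1, j <= k -> TK k N0 N1 -> TK j N0 N1.
Proof. unfold TKg; intros k j N0 N1 Hj [A [B C]]; split; auto; split; auto; intros; apply C; auto; lia. Qed.

Lemma ER_anti : forall k j X0 X1, j <= k -> ER k X0 X1 -> ER j X0 X1.
Proof. unfold ERg; intros k j X0 X1 Hj H i N0 N1 Hi HV; apply H; auto; lia. Qed.

Lemma PC_anti : forall k j N0 N1, j <= k -> PC k N0 N1 -> PC j N0 N1.
Proof. unfold PCg; intros k j N0 N1 Hj [A [B C]]; split; auto; split; auto; intros; apply C; auto; lia. Qed.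

Lemma E_anti : forall k j t0 t1, j <= k -> E k t0 t1 -> E j t0 t1.
Proof. unfold Eg; intros k j t0 t1 Hj H j' Hj'; apply H; lia. Qed.

Lemma TK_VK : forall k F0 F1, TK k F0 F1 -> VK k F0 F1.
Proof. unfold TKg, VKg, ectx_pure; intros; intuition. Qed.

Lemma PC_pure : forall k F0 F1, PC k F0 F1 -> ectx_pure F0 /\ ectx_pure F1.
Proof. unfold PCg; intros; intuition. Qed.

Lemma VK_ok : forall k F0 F1, VK k F0 F1 -> ectx_ok F0 /\ ectx_ok F1.
Proof. unfold VKg; intros; intuition. Qed.

Lemma E_rsteps : forall k m t0 t1 t1', nsteps m t1 t1' -> E k t0 t1' -> E k t0 t1.
Proof.
  unfold Eg; intros k m t0 t1 t1' Hs H j Hj; destruct (H j Hj) as [H1 H2]; split.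
  - intros F0 F1 HT; apply (Obs_rsteps m _ _ (plug F1 t1')); [|apply H1; auto].
    apply nsteps_plug; auto. destruct HT as [_ [[A _] _]]; auto.
  - intros N0 N1 F0 F1 HN HP.
    apply (Obs_rsteps m _ _ (plug N1 (Reset (plug F1 t1')))); [|apply H2; auto].
    destruct (PC_pure _ _ _ HP) as [_ [HF1 _]].
    apply nsteps_plug; [apply HN|]. apply (nsteps_plug (EReset F1)); [exact HF1|].
    auto.
Qed.

Lemma ER_rsteps : forall k m t0 t1 t1', nsteps m t1 t1' -> ER k t0 t1' -> ER k t0 t1.
Proof.
  unfold ERg; intros k m t0 t1 t1' Hs H i N0 N1 Hi HN.
  apply (Obs_rsteps m _ _ (plug N1 t1')); [|apply H; auto].
  apply nsteps_plug; auto. apply HN.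
Qed.

Lemma V_E : forall k v0 v1, V k v0 v1 -> E k v0 v1.
Proof.
  intros k v0 v1 HV j Hj; split.
  - intros F0 F1 [_ [_ H]]; apply H; auto. eapply V_anti; eauto.
  - intros N0 N1 F0 F1 HN [_ [_ H]].
    exact (H j v0 v1 (le_n j) (V_anti _ _ _ _ Hj HV) j N0 N1 (le_n j) HN).
Qed.

Lemma PC_hole : forall k, PC k EHole EHole.
Proof.
  intros k; split; [split; simpl; auto|]; split; [split; simpl; auto|].
  intros i w0 w1 Hi HV j N0 N1 Hj [A [B C]]; simpl.
  eapply Obs_lstep0; [apply sstep_plug; auto; apply ss_reset; apply (V_val _ _ _ HV)|].
  intros j' ->. eapply Obs_rsteps; [apply nsteps_plug; auto; apply nsteps_one; apply ss_reset; apply (V_val _ _ _ HV)|].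
  apply C; auto. eapply V_anti; [|eauto]; lia.
Qed.

Lemma TK_hole : forall k, TK k EHole EHole.
Proof.
  intros k; split; [split; simpl; auto|]; split; [split; simpl; auto|].
  intros i w0 w1 Hi HV; simpl; apply Obs_val; apply (V_val _ _ _ HV).
Qed.

Lemma VK_comp_reset : forall k N0 N1 F0 F1, VK k N0 N1 -> PC k F0 F1 ->
  VK k (ecomp N0 (EReset F0)) (ecomp N1 (EReset F1)).
Proof.
  intros k N0 N1 F0 F1 HN HP. destruct (VK_ok _ _ _ HN). destruct (PC_pure _ _ _ HP) as [[? _] [? _]].
  split; [apply ok_ecomp; simpl; auto|]; split; [apply ok_ecomp; simpl; auto|].
  intros i w0 w1 Hi HV; rewrite !plug_ecomp; simpl.
  destruct HP as [_ [_ HP]]. apply (HP i); auto. eapply VK_anti; eauto.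
Qed.

Lemma ER_E : forall k X0 X1, ER k X0 X1 -> E k X0 X1.
Proof.
  intros k X0 X1 H j Hj; split.
  - intros F0 F1 HT; apply H; auto; apply TK_VK; auto.
  - intros N0 N1 F0 F1 HN HP.
    pose proof (H j (ecomp N0 (EReset F0)) (ecomp N1 (EReset F1)) Hj (VK_comp_reset _ _ _ _ _ HN HP)) as HH.
    rewrite !plug_ecomp in HH; exact HH.
Qed.

(** * Compatibility *)
Definition Vsub (k : nat) (s0 s1 : nat -> term) := forall n, V k (s0 n) (s1 n).

Lemma Vsub_anti : forall k j s0 s1, j <= k -> Vsub k s0 s1 -> Vsub j s0 s1.
Proof. unfold Vsub; intros; eapply V_anti; eauto. Qed.

Lemma Vsub_vsub : forall k s0 s1, Vsub k s0 s1 -> vsub s0 /\ vsub s1.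
Proof. unfold Vsub, vsub; split; intros n; apply (V_val _ _ _ (H n)). Qed.

Lemma Vsub_scons : forall k v0 v1 s0 s1, V k v0 v1 -> Vsub k s0 s1 -> Vsub k (scons v0 s0) (scons v1 s1).
Proof. unfold Vsub; intros k v0 v1 s0 s1 H1 H2 [|n]; simpl; auto. Qed.

Lemma Vsub_id : forall k, (forall n, V k (Var n) (Var n)) -> Vsub k Var Var.
Proof. unfold Vsub; auto. Qed.

Definition Lo (u0 u1 : term) : Prop :=
  forall k s0 s1, Vsub k s0 s1 -> E k (subst s0 u0) (subst s1 u1).

Lemma Lo_var : forall n, Lo (Var n) (Var n).
Proof. intros n k s0 s1 H; simpl; apply V_E; apply H. Qed.

Lemma Lo_lam : forall c0 c1, Lo c0 c1 -> Lo (Lam c0) (Lam c1).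
Proof.
  intros c0 c1 H k s0 s1 Hs; simpl; apply V_E. apply V_unfold; split; [simpl; auto|]; split; [simpl; auto|].
  intros j p0 p1 Hj HV. simpl.
  apply (E_rsteps _ 1 _ _ (subst1 p1 (subst (up s1) c1))).
  - apply nsteps_one; apply ss_beta; apply (V_val _ _ _ HV).
  - rewrite !subst1_up. apply H. apply Vsub_scons; auto. eapply Vsub_anti; [|eauto]; lia.
Qed.

Lemma ok_appL : forall F b, ectx_pure F -> ectx_pure (ecomp F (EAppL EHole b)).
Proof. intros; apply pure_ecomp; auto; split; simpl; auto. Qed.

Lemma ok_appR : forall F w, ectx_pure F -> is_val w -> ectx_pure (ecomp F (EAppR w EHole)).
Proof. intros; apply pure_ecomp; auto; split; simpl; auto. Qed.

Lemma plug_appL : forall F a b, plug (ecomp F (EAppL EHole b)) a = plug F (App a b).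
Proof. intros; rewrite plug_ecomp; reflexivity. Qed.

Lemma plug_appR : forall F a b, plug (ecomp F (EAppR a EHole)) b = plug F (App a b).
Proof. intros; rewrite plug_ecomp; reflexivity. Qed.

Lemma app_obs_T : forall i F0 F1 w0 w1 p0 p1, TK i F0 F1 -> V i w0 w1 -> V i p0 p1 ->
  Obs i (plug F0 (App w0 p0)) (plug F1 (App w1 p1)).
Proof.
  intros i F0 F1 w0 w1 p0 p1 HT Hw Hp.
  destruct (V_val _ _ _ Hw) as [Hw0 Hw1]; destruct (V_val _ _ _ Hp) as [Hp0 Hp1].
  destruct HT as [[HF0 HF0'] [[HF1 HF1'] HT]].
  destruct w0; simpl in Hw0; try contradiction.
  - apply Obs_open; auto.
  - eapply Obs_lstep0; [apply sstep_plug; auto; apply ss_beta; auto|].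
    intros j' ->. apply V_unfold in Hw; destruct Hw as [_ [_ Hw]].
    assert (HE : E j' (reduct (Lam w0) p0) (App w1 p1)) by (apply Hw; [lia| eapply V_anti; [|eauto]; lia]).
    apply (HE j' (le_n _)). split; [split; auto|]; split; [split; auto|].
    intros; apply HT; auto; lia.
Qed.

Lemma app_obs_B : forall i N0 N1 F0 F1 w0 w1 p0 p1, VK i N0 N1 -> PC i F0 F1 -> V i w0 w1 -> V i p0 p1 ->
  Obs i (plug N0 (Reset (plug F0 (App w0 p0)))) (plug N1 (Reset (plug F1 (App w1 p1)))).
Proof.
  intros i N0 N1 F0 F1 w0 w1 p0 p1 HN HP Hw Hp.
  destruct (V_val _ _ _ Hw) as [Hw0 Hw1]; destruct (V_val _ _ _ Hp) as [Hp0 Hp1].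
  destruct (PC_pure _ _ _ HP) as [[HF0 HF0'] [HF1 HF1']]. destruct (VK_ok _ _ _ HN) as [HN0 HN1].
  destruct w0; simpl in Hw0; try contradiction.
  - pose proof (plug_ecomp N0 (EReset F0)) as PE; simpl in PE; rewrite <- PE.
    apply Obs_open; auto. apply ok_ecomp; auto.
  - eapply Obs_lstep0.
    { apply sstep_plug; auto. apply ss_resetc. apply sstep_plug; auto. apply ss_beta; auto. }
    intros j' ->. apply V_unfold in Hw; destruct Hw as [_ [_ Hw]].
    assert (HE : E j' (reduct (Lam w0) p0) (App w1 p1)) by (apply Hw; [lia| eapply V_anti; [|eauto]; lia]).
    apply (HE j' (le_n _)).
    + eapply VK_anti; [|eauto]; lia.
    + eapply PC_anti; [|eauto]; lia.
Qed.

Lemma E_app : forall k a0 a1 b0 b1, E k a0 a1 -> E k b0 b1 -> E k (App a0 b0) (App a1 b1).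
Proof.
  intros k a0 a1 b0 b1 Ha Hb j Hj; split.
  - intros F0 F1 HT. rewrite <- !plug_appL. apply (Ha j Hj).
    destruct HT as [HF0 [HF1 HT]].
    split; [apply ok_appL; auto|]; split; [apply ok_appL; auto|].
    intros i w0 w1 Hi Hw. rewrite !plug_appL, <- !plug_appR.
    destruct (V_val _ _ _ Hw) as [Hw0 Hw1].
    apply (Hb i ltac:(lia)).
    split; [apply ok_appR; auto|]; split; [apply ok_appR; auto|].
    intros i' p0 p1 Hi' Hp. rewrite !plug_appR.
    apply app_obs_T; auto.
    + split; auto; split; auto. intros; apply HT; auto; lia.
    + eapply V_anti; [|eauto]; lia.
  - intros N0 N1 F0 F1 HN HP. rewrite <- !plug_appL. apply (Ha j Hj); auto.
    destruct HP as [HF0 [HF1 HP]].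
    split; [apply ok_appL; auto|]; split; [apply ok_appL; auto|].
    intros i w0 w1 Hi Hw i' N0' N1' Hi' HN'. rewrite !plug_appL, <- !plug_appR.
    destruct (V_val _ _ _ Hw) as [Hw0 Hw1].
    apply (Hb i' ltac:(lia)); auto.
    split; [apply ok_appR; auto|]; split; [apply ok_appR; auto|].
    intros i'' p0 p1 Hi'' Hp m N0'' N1'' Hm HN''. rewrite !plug_appR.
    apply app_obs_B; auto.
    + split; auto; split; auto. intros; apply HP; auto; lia.
    + eapply V_anti; [|eauto]; lia.
    + eapply V_anti; [|eauto]; lia.
Qed.

Lemma Lo_app : forall a0 a1 b0 b1, Lo a0 a1 -> Lo b0 b1 -> Lo (App a0 b0) (App a1 b1).
Proof. intros; intros k s0 s1 Hs; simpl; apply E_app; auto. Qed.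

Lemma E_reset : forall k t0 t1, E k t0 t1 -> E k (Reset t0) (Reset t1).
Proof.
  intros k t0 t1 H j Hj; split.
  - intros F0 F1 HT. exact (proj2 (H j Hj) F0 F1 EHole EHole (TK_VK _ _ _ HT) (PC_hole j)).
  - intros N0 N1 F0 F1 HN HP.
    pose proof (proj2 (H j Hj) _ _ EHole EHole (VK_comp_reset _ _ _ _ _ HN HP) (PC_hole j)) as HH.
    rewrite !plug_ecomp in HH; exact HH.
Qed.

Lemma Lo_reset : forall t0 t1, Lo t0 t1 -> Lo (Reset t0) (Reset t1).
Proof. intros; intros k s0 s1 Hs; simpl; apply E_reset; auto. Qed.

Lemma subst1_kappa : forall p F, subst1 p (Reset (plug_fresh F)) = Reset (plug F p).
Proof.
  intros. change (subst1 p (Reset (plug_fresh F))) with (Reset (subst1 p (plug_fresh F))).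
  rewrite subst1_pf; reflexivity.
Qed.

Lemma PC_kappa : forall k F0 F1, PC k F0 F1 ->
  V k (Lam (Reset (plug_fresh F0))) (Lam (Reset (plug_fresh F1))).
Proof.
  intros k F0 F1 HP. apply V_unfold; split; [simpl; auto|]; split; [simpl; auto|].
  intros j p0 p1 Hj Hp. change (reduct (Lam (Reset (plug_fresh F0))) p0) with (subst1 p0 (Reset (plug_fresh F0))).
  rewrite subst1_kappa.
  destruct (V_val _ _ _ Hp) as [Hp0 Hp1].
  apply (E_rsteps _ 1 _ _ (Reset (plug F1 p1))).
  - apply nsteps_one. pose proof (ss_beta (Reset (plug_fresh F1)) p1 Hp1) as HH.
    rewrite subst1_kappa in HH; exact HH.
  - apply ER_E. destruct HP as [_ [_ HP]]. apply HP; auto; lia.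
Qed.

Lemma Lo_shift : forall c0 c1, Lo c0 c1 -> Lo (Shift c0) (Shift c1).
Proof.
  intros c0 c1 H k s0 s1 Hs; simpl. intros j Hj; split.
  - intros F0 F1 [HF0 [HF1 _]]. apply Obs_cs; [exists F0, (subst (up s0) c0) | exists F1, (subst (up s1) c1)]; split; auto.
  - intros N0 N1 F0 F1 HN HP.
    destruct (PC_pure _ _ _ HP) as [HF0 HF1]. destruct (VK_ok _ _ _ HN) as [HN0 HN1].
    eapply Obs_lstep0.
    { apply sstep_plug; auto. apply ss_shift; auto. }
    intros j' ->.
    eapply Obs_rsteps. { apply nsteps_one. apply sstep_plug; auto. apply ss_shift; auto. }
    rewrite !subst1_up.
    assert (HE : E j' (subst (scons (Lam (Reset (plug_fresh F0))) s0) c0)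
                      (subst (scons (Lam (Reset (plug_fresh F1))) s1) c1)).
    { apply H. apply Vsub_scons.
      - apply PC_kappa. eapply PC_anti; [|eauto]; lia.
      - eapply Vsub_anti; [|eauto]; lia. }
    exact (proj2 (HE j' (le_n _)) N0 N1 EHole EHole (VK_anti (S j') j' _ _ ltac:(lia) HN) (PC_hole j')).
Qed.

Lemma Lo_refl : forall t, Lo t t.
Proof.
  induction t; auto using Lo_var, Lo_lam, Lo_app, Lo_shift, Lo_reset.
Qed.

Lemma Lo_ctx : forall C t0 t1, Lo t0 t1 -> Lo (cplug C t0) (cplug C t1).
Proof.
  induction C; intros; simpl; auto using Lo_lam, Lo_app, Lo_shift, Lo_reset, Lo_refl.
Qed.

(** * Inclusion of a normal-form simulation in the logical relation *)

Definition rf (u : term) : Prop := is_val u \/ exists a, u = Reset a.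

Lemma rf_step : forall u u', rf u -> sstep u u' -> rf u'.
Proof.
  intros u u' [Hv | [a ->]] Hs.
  - exfalso; eapply val_nstep; eauto.
  - inversion Hs; subst; unfold rf; eauto.
Qed.

Lemma rf_steps : forall n u u', rf u -> nsteps n u u' -> rf u'.
Proof. induction 2; eauto using rf_step. Qed.

Lemma evalsplit : forall i C s u n, ectx_ok C -> vsub s -> nsteps i (plug C (subst s u)) n -> irr n ->
  exists m u', m <= i /\ nsteps m u u' /\ irr u'.
Proof.
  induction i; intros C s u n HC Hs Hn Hirr.
  - destruct (classic (exists u', sstep u u')) as [[u' Hu'] | Hno].
    + inversion Hn; subst. exfalso; eapply Hirr. apply sstep_plug; auto. apply sstep_subst; eauto.
    + exists 0, u; split; auto; split; [constructor|]. intros u' Hu'; apply Hno; eauto.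
  - destruct (classic (exists u', sstep u u')) as [[u' Hu'] | Hno].
    + inversion Hn; subst.
      assert (Hst : sstep (plug C (subst s u)) (plug C (subst s u'))) by (apply sstep_plug; auto; apply sstep_subst; auto).
      assert (u0 = plug C (subst s u')) by (eapply sstep_det; eauto). subst.
      destruct (IHi C s u' n HC Hs H1 Hirr) as [m [u'' [A [B D]]]].
      exists (S m), u''; split; [lia|]; split; auto; econstructor; eauto.
    + exists 0, u; split; [lia|]; split; [constructor|]. intros u' Hu'; apply Hno; eauto.
Qed.

Lemma ecomp_assoc : forall A B C, ecomp (ecomp A B) C = ecomp A (ecomp B C).
Proof. induction A; intros; simpl; f_equal; auto. Qed.

Lemma ecomp_hole_r : forall A, ecomp A EHole = A.
Proof. induction A; simpl; f_equal; auto. Qed.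

Lemma no_reset_ecomp_reset : forall E F, ~ no_reset (ecomp E (EReset F)).
Proof. induction E; simpl; auto. Qed.

Lemma ectx_rel_pure : forall (R : term -> term -> Prop) F0 F1, ectx_pure F0 -> ectx_rel R F0 F1 ->
  ectx_pure F1 /\ R (plug_fresh F0) (plug_fresh F1).
Proof.
  intros R F0 F1 HF H. destruct H as [[E0' [G0 [E1' [G1 H]]]] | H]; [|tauto].
  exfalso. destruct H as [_ [_ [_ [_ [Heq _]]]]]. subst. destruct HF as [_ HF].
  eapply no_reset_ecomp_reset; eauto.
Qed.

Lemma nf_val_inv : forall (R : term -> term -> Prop) v n, nf_rel R v n -> is_val v ->
  is_val n /\ R (app_fresh v) (app_fresh n).
Proof.
  intros R v n H Hv; destruct H.
  - auto.
  - exfalso; eapply plug_shift_not_val; eauto.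
  - exfalso; eapply plug_app_not_val; eauto.
Qed.

Lemma nf_var_app_inv : forall (R : term -> term -> Prop) z e, nf_rel R (App (Var z) (Var 0)) e ->
  exists E1 w1, e = plug E1 (App (Var z) w1) /\ ectx_pure E1 /\ R (Var 0) (plug_fresh E1) /\
     is_val w1 /\ R (app_fresh (Var 0)) (app_fresh w1).
Proof.
  intros R z e H. inversion H; subst.
  - simpl in H0; contradiction.
  - exfalso. destruct F0; simpl in H0; try discriminate; injection H0; intros; subst.
    + eapply plug_shift_not_var; eauto.
    + eapply plug_shift_not_var; eauto.
  - destruct E0; simpl in H0; try discriminate; injection H0; intros; subst.
    + destruct (nf_val_inv _ _ _ H6 H3) as [Hw1 Hr].
      destruct H5 as [[E0' [G0 [E1' [G1 [_ [_ [_ [_ [Heq _]]]]]]]]] | [_ [HE1 Hr1]]].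
      * destruct E0'; discriminate.
      * exists E1, v1; repeat split; auto; apply HE1.
    + exfalso; eapply plug_app_not_var; eauto.
    + exfalso; eapply plug_app_not_var; eauto.
Qed.

Definition GE (j : nat) (G0 G1 : ectx) :=
  forall i w0 w1, i <= j -> V i w0 w1 -> E i (plug G0 w0) (plug G1 w1).
Definition GER (j : nat) (G0 G1 : ectx) :=
  forall i w0 w1, i <= j -> V i w0 w1 -> ER i (plug G0 w0) (plug G1 w1).

Lemma TKcomp : forall j F0 F1 G0 G1, TK j F0 F1 -> GE j G0 G1 -> ectx_pure G0 -> ectx_pure G1 ->
  TK j (ecomp F0 G0) (ecomp F1 G1).
Proof.
  intros j F0 F1 G0 G1 [HF0 [HF1 HT]] HG HG0 HG1.
  split; [apply pure_ecomp; auto|]; split; [apply pure_ecomp; auto|].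
  intros i w0 w1 Hi Hw. rewrite !plug_ecomp.
  apply (HG i w0 w1 Hi Hw i (le_n _)). split; auto; split; auto. intros; apply HT; auto; lia.
Qed.

Lemma PCcomp : forall j F0 F1 G0 G1, PC j F0 F1 -> GE j G0 G1 -> ectx_pure G0 -> ectx_pure G1 ->
  PC j (ecomp F0 G0) (ecomp F1 G1).
Proof.
  intros j F0 F1 G0 G1 [HF0 [HF1 HP]] HG HG0 HG1.
  split; [apply pure_ecomp; auto|]; split; [apply pure_ecomp; auto|].
  intros i w0 w1 Hi Hw i' N0 N1 Hi' HN. rewrite !plug_ecomp.
  apply (HG i w0 w1 Hi Hw i' Hi'); auto. split; auto; split; auto. intros; apply HP; auto; lia.
Qed.

Lemma E_ctx_pure : forall j t0 t1 G0 G1, E j t0 t1 -> GE j G0 G1 -> ectx_pure G0 -> ectx_pure G1 ->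
  E j (plug G0 t0) (plug G1 t1).
Proof.
  intros j t0 t1 G0 G1 H HG HG0 HG1 j' Hj'; split.
  - intros F0 F1 HT. rewrite <- !plug_ecomp. apply (H j' Hj'). apply TKcomp; auto.
    intros i w0 w1 Hi Hw; apply HG; auto; lia.
  - intros N0 N1 F0 F1 HN HP. rewrite <- !plug_ecomp. apply (H j' Hj'); auto. apply PCcomp; auto.
    intros i w0 w1 Hi Hw; apply HG; auto; lia.
Qed.

Definition Ctx_E (j : nat) (C0 C1 : ectx) :=
  ectx_ok C0 /\ ectx_ok C1 /\ forall i X0 X1, i <= j -> E i X0 X1 -> Obs i (plug C0 X0) (plug C1 X1).
Definition Ctx_ER (j : nat) (C0 C1 : ectx) :=
  ectx_ok C0 /\ ectx_ok C1 /\ forall i X0 X1, i <= j -> ER i X0 X1 -> Obs i (plug C0 X0) (plug C1 X1).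

Lemma Ctx_E_TK : forall j F0 F1, TK j F0 F1 -> Ctx_E j F0 F1.
Proof.
  intros j F0 F1 HT. destruct (TK_VK _ _ _ HT) as [A [B _]]. split; auto; split; auto.
  intros i X0 X1 Hi HX. apply (HX i (le_n _)). eapply TK_anti; eauto.
Qed.

Lemma Ctx_E_B : forall j N0 N1 F0 F1, VK j N0 N1 -> PC j F0 F1 ->
  Ctx_E j (ecomp N0 (EReset F0)) (ecomp N1 (EReset F1)).
Proof.
  intros j N0 N1 F0 F1 HN HP. destruct (VK_comp_reset _ _ _ _ _ HN HP) as [A [B _]].
  split; auto; split; auto.
  intros i X0 X1 Hi HX. rewrite !plug_ecomp. apply (HX i (le_n _)).
  eapply VK_anti; eauto. eapply PC_anti; eauto.
Qed.

Lemma Ctx_ER_VK : forall j N0 N1, VK j N0 N1 -> Ctx_ER j N0 N1.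
Proof.
  intros j N0 N1 HN. destruct HN as [A [B C]]. split; auto; split; auto.
  intros i X0 X1 Hi HX. apply HX; auto. split; auto; split; auto. intros; apply C; auto; lia.
Qed.

Lemma VK_from_CtxE : forall j C0 C1 G0 G1, Ctx_E j C0 C1 -> GE j G0 G1 -> ectx_ok G0 -> ectx_ok G1 ->
  VK j (ecomp C0 G0) (ecomp C1 G1).
Proof.
  intros j C0 C1 G0 G1 [A [B C]] HG HG0 HG1. split; [apply ok_ecomp; auto|]; split; [apply ok_ecomp; auto|].
  intros i w0 w1 Hi Hw. rewrite !plug_ecomp. apply C; auto.
Qed.

Lemma VK_from_CtxER : forall j C0 C1 G0 G1, Ctx_ER j C0 C1 -> GER j G0 G1 -> ectx_ok G0 -> ectx_ok G1 ->
  VK j (ecomp C0 G0) (ecomp C1 G1).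
Proof.
  intros j C0 C1 G0 G1 [A [B C]] HG HG0 HG1. split; [apply ok_ecomp; auto|]; split; [apply ok_ecomp; auto|].
  intros i w0 w1 Hi Hw. rewrite !plug_ecomp. apply C; auto.
Qed.

Definition MAINk (R : term -> term -> Prop) (k : nat) :=
  forall u0 u1 s0 s1, R u0 u1 -> Vsub k s0 s1 -> E k (subst s0 u0) (subst s1 u1).
Definition MAINRk (R : term -> term -> Prop) (k : nat) :=
  forall u0 u1 s0 s1, R u0 u1 -> rf u0 -> Vsub k s0 s1 -> ER k (subst s0 u0) (subst s1 u1).
Definition VALk (R : term -> term -> Prop) (k : nat) :=
  forall v0 v1 s0 s1, is_val v0 -> is_val v1 -> R (app_fresh v0) (app_fresh v1) -> Vsub k s0 s1 ->
    V k (subst s0 v0) (subst s1 v1).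

Lemma GE_of_MAIN : forall R j E0 E1 s0 s1, (forall i, i <= j -> MAINk R i) ->
  R (plug_fresh E0) (plug_fresh E1) -> Vsub j s0 s1 -> GE j (esubst s0 E0) (esubst s1 E1).
Proof.
  intros R j E0 E1 s0 s1 HM HR Hs i w0 w1 Hi Hw. rewrite <- !subst_scons_pf.
  apply HM; auto. apply Vsub_scons; auto. eapply Vsub_anti; eauto.
Qed.

Lemma GER_of_MAINR : forall R j E0 E1 s0 s1, (forall i, i <= j -> MAINRk R i) ->
  R (plug_fresh E0) (plug_fresh E1) -> rf (plug_fresh E0) -> Vsub j s0 s1 -> GER j (esubst s0 E0) (esubst s1 E1).
Proof.
  intros R j E0 E1 s0 s1 HM HR Hrf Hs i w0 w1 Hi Hw. rewrite <- !subst_scons_pf.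
  apply HM; auto. apply Vsub_scons; auto. eapply Vsub_anti; eauto.
Qed.

Lemma PC_of_MAINR : forall R j G0 G1 s0 s1, (forall i, i <= j -> MAINRk R i) ->
  ectx_pure G0 -> ectx_pure G1 -> vsub s0 -> vsub s1 ->
  R (Reset (plug_fresh G0)) (Reset (plug_fresh G1)) -> Vsub j s0 s1 -> PC j (esubst s0 G0) (esubst s1 G1).
Proof.
  intros R j G0 G1 s0 s1 HM HG0 HG1 Hs0 Hs1 HR Hs.
  split; [apply pure_esubst; auto|]; split; [apply pure_esubst; auto|].
  intros i w0 w1 Hi Hw. rewrite <- !subst_scons_pf.
  change (ER i (subst (scons w0 s0) (Reset (plug_fresh G0))) (subst (scons w1 s1) (Reset (plug_fresh G1)))).
  apply HM; auto. right; eauto. apply Vsub_scons; auto. eapply Vsub_anti; eauto.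
Qed.

Lemma core2 : forall (R : term -> term -> Prop) k,
  (forall j, j < k -> MAINk R j) -> (forall j, j < k -> MAINRk R j) -> (forall j, j <= k -> VALk R j) ->
  forall (P : term -> Prop) s0 s1, Vsub k s0 s1 ->
  forall l C0 C1, l <= k -> ectx_ok C0 -> ectx_ok C1 ->
  (forall i w0 w1, i <= l -> V i w0 w1 -> Obs i (plug C0 w0) (plug C1 w1)) ->
  (forall G0 G1 c0 c1, ectx_pure G0 -> ectx_pure G1 -> R (plug_fresh G0) (plug_fresh G1) ->
     R (Reset c0) (Reset c1) -> P (plug G0 (Shift c0)) ->
     Obs l (plug C0 (subst s0 (plug G0 (Shift c0)))) (plug C1 (subst s1 (plug G1 (Shift c1))))) ->
  (forall E0 E1 x w0, ectx_pure E0 -> ectx_pure E1 -> R (plug_fresh E0) (plug_fresh E1) ->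
     P (plug E0 (App (Var x) w0)) -> forall l', l' < l ->
     Ctx_E l' (ecomp C0 (esubst s0 E0)) (ecomp C1 (esubst s1 E1))) ->
  (forall E0' E1' G0 x w0, ectx_ok E0' -> ectx_ok E1' -> R (plug_fresh E0') (plug_fresh E1') ->
     P (plug (ecomp E0' (EReset G0)) (App (Var x) w0)) -> forall l', l' < l ->
     VK l' (ecomp C0 (esubst s0 E0')) (ecomp C1 (esubst s1 E1'))) ->
  forall m0 m1, P m0 -> nf_rel R m0 m1 ->
  Obs l (plug C0 (subst s0 m0)) (plug C1 (subst s1 m1)).
Proof.
  intros R k IHM IHR HVAL P s0 s1 Hs l C0 C1 Hl HC0 HC1 H2 H3 H4 H5 m0 m1 HP Hnf.
  destruct (Vsub_vsub _ _ _ Hs) as [Hs0 Hs1].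
  destruct Hnf as [v0 v1 Hv0 Hv1 Hrv | F0 F1 t0 t1 HF0 HF1 Hctx Hrr | E0 E1 x v0 v1 HE0 HE1 Hv0 Hv1 Hctx Hnfv].
  - apply H2; auto. apply HVAL; auto. eapply Vsub_anti; eauto.
  - destruct (ectx_rel_pure _ _ _ HF0 Hctx) as [_ Hr]. apply H3; auto.
  - rewrite !plug_subst; simpl.
    assert (Hx := Hs x).
    destruct (V_val _ _ _ Hx) as [Hx0 Hx1].
    assert (Hv0' : is_val (subst s0 v0)) by (apply val_subst; auto).
    assert (Hv1' : is_val (subst s1 v1)) by (apply val_subst; auto).
    assert (HE0s : ectx_ok (esubst s0 E0)) by (apply ok_esubst; auto).
    assert (HE1s : ectx_ok (esubst s1 E1)) by (apply ok_esubst; auto).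
    destruct (s0 x) as [z | a | | |] eqn:Hsx; simpl in Hx0; try contradiction.
    + rewrite <- plug_ecomp. apply Obs_open; auto. apply ok_ecomp; auto.
    + eapply Obs_lstep0.
      { apply sstep_plug; auto. apply sstep_plug; auto. apply ss_beta; auto. }
      intros l' ->.
      destruct (nf_val_inv _ _ _ Hnfv Hv0) as [_ Hrw].
      assert (Hw : V l' (subst s0 v0) (subst s1 v1)).
      { apply (HVAL l'); [lia|auto|auto|auto|]. eapply Vsub_anti; [|eauto]; lia. }
      apply V_unfold in Hx. destruct Hx as [_ [_ Hx]].
      assert (HE : E l' (reduct (Lam a) (subst s0 v0)) (App (s1 x) (subst s1 v1))) by (apply Hx; auto; lia).
      simpl in HE.
      destruct Hctx as [[E0' [G0 [E1' [G1 [HE0' [HG0 [HE1' [HG1 [Heq0 [Heq1 [Hr1 Hr2]]]]]]]]]]] | [HE0p [HE1p Hr]]].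
      * subst E0 E1.
        assert (HVK : VK l' (ecomp C0 (esubst s0 E0')) (ecomp C1 (esubst s1 E1'))).
        { eapply H5; eauto; lia. }
        assert (HPC : PC l' (esubst s0 G0) (esubst s1 G1)).
        { eapply PC_of_MAINR; eauto.
          - intros i Hi; apply IHR; lia.
          - eapply Vsub_anti; [|eauto]; lia. }
        destruct (Ctx_E_B _ _ _ _ _ HVK HPC) as [_ [_ HC]].
        pose proof (HC l' _ _ (le_n _) HE) as HO.
        rewrite !esubst_ecomp, !plug_ecomp in *. simpl in *. exact HO.
      * destruct (H4 E0 E1 x v0 HE0p HE1p Hr HP l' ltac:(lia)) as [_ [_ HC]].
        pose proof (HC l' _ _ (le_n _) HE) as HO.
        rewrite !plug_ecomp in HO. exact HO.
Qed.

Lemma core : forall (R : term -> term -> Prop), nf_simulation R -> forall k,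
  (forall j, j < k -> MAINk R j) -> (forall j, j < k -> MAINRk R j) -> (forall j, j <= k -> VALk R j) ->
  forall (P : term -> Prop), (forall n u u', P u -> nsteps n u u' -> P u') ->
  forall s0 s1, Vsub k s0 s1 ->
  forall l C0 C1, l <= k -> ectx_ok C0 -> ectx_ok C1 ->
  (forall i w0 w1, i <= l -> V i w0 w1 -> Obs i (plug C0 w0) (plug C1 w1)) ->
  (forall G0 G1 c0 c1, ectx_pure G0 -> ectx_pure G1 -> R (plug_fresh G0) (plug_fresh G1) ->
     R (Reset c0) (Reset c1) -> P (plug G0 (Shift c0)) ->
     Obs l (plug C0 (subst s0 (plug G0 (Shift c0)))) (plug C1 (subst s1 (plug G1 (Shift c1))))) ->
  (forall E0 E1 x w0, ectx_pure E0 -> ectx_pure E1 -> R (plug_fresh E0) (plug_fresh E1) ->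
     P (plug E0 (App (Var x) w0)) -> forall l', l' < l ->
     Ctx_E l' (ecomp C0 (esubst s0 E0)) (ecomp C1 (esubst s1 E1))) ->
  (forall E0' E1' G0 x w0, ectx_ok E0' -> ectx_ok E1' -> R (plug_fresh E0') (plug_fresh E1') ->
     P (plug (ecomp E0' (EReset G0)) (App (Var x) w0)) -> forall l', l' < l ->
     VK l' (ecomp C0 (esubst s0 E0')) (ecomp C1 (esubst s1 E1'))) ->
  forall u0 u1, R u0 u1 -> P u0 ->
  Obs l (plug C0 (subst s0 u0)) (plug C1 (subst s1 u1)).
Proof.
  intros R HR k IHM IHR HVAL P HPst s0 s1 Hs l C0 C1 Hl HC0 HC1 H2 H3 H4 H5 u0 u1 HRu HPu.
  destruct (Vsub_vsub _ _ _ Hs) as [Hs0 Hs1].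
  intros i n0 Hi Hst Hirr Hv.
  destruct (evalsplit i C0 s0 u0 n0 HC0 Hs0 Hst Hirr) as [m [mm0 [Hm [Hmst Hmirr]]]].
  destruct (HR u0 u1 HRu mm0 (conj (nsteps_steps _ _ _ Hmst) (irr_irreducible _ Hmirr)))
    as [m1 [[Hsteps1 Hirr1] Hnf]].
  destruct (steps_nsteps _ _ Hsteps1) as [m' Hm'].
  assert (HO : Obs l (plug C0 (subst s0 u0)) (plug C1 (subst s1 u1))).
  { apply (Obs_lsteps m _ (plug C0 (subst s0 mm0))).
    - apply nsteps_plug; auto; apply nsteps_subst; auto.
    - intros Hml. apply (Obs_rsteps m' _ _ (plug C1 (subst s1 m1))).
      + apply nsteps_plug; auto; apply nsteps_subst; auto.
      + apply (core2 R k IHM IHR HVAL P s0 s1 Hs (l - m) C0 C1); auto; try lia.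
        * intros; apply H2; auto; lia.
        * intros; eapply Obs_anti; [|apply H3; eauto]; lia.
        * intros; eapply H4; eauto; lia.
        * intros; eapply H5; eauto; lia.
        * eapply HPst; eauto. }
  exact (HO i n0 Hi Hst Hirr Hv).
Qed.

Lemma app_red : forall s v p, vsub s -> is_val v -> is_val p ->
  exists n, nsteps n (App (subst s v) p) (subst (scons p s) (app_fresh v)).
Proof.
  intros s v p Hs Hv Hp. destruct v; simpl in Hv; try contradiction.
  - exists 0; simpl; constructor.
  - exists 1; simpl. apply nsteps_one. rewrite <- subst1_up. apply ss_beta; auto.
Qed.

Lemma VAL_all : forall (R : term -> term -> Prop), nf_simulation R ->
  forall k, (forall j, j < k -> MAINk R j) -> VALk R k.
Proof.
  intros R HR k. induction k as [k IHk] using (well_founded_induction lt_wf).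
  intros IHM v0 v1 s0 s1 Hv0 Hv1 HRv Hs.
  destruct (Vsub_vsub _ _ _ Hs) as [Hs0 Hs1].
  apply V_unfold; split; [apply val_subst; auto|]; split; [apply val_subst; auto|].
  intros j p0 p1 Hj Hp. destruct (V_val _ _ _ Hp) as [Hp0 Hp1].
  assert (Hs' : Vsub j (scons p0 s0) (scons p1 s1)).
  { apply Vsub_scons; auto. eapply Vsub_anti; [|eauto]; lia. }
  destruct (app_red s1 v1 p1 Hs1 Hv1 Hp1) as [n Hn].
  apply (E_rsteps _ _ _ _ _ Hn).
  destruct v0 as [y | a0 | | |]; simpl in Hv0; try contradiction.
  -
    simpl. simpl in HRv.
    assert (Hirr0 : irr (App (Var (S y)) (Var 0))) by (apply (open_irr EHole); simpl; auto).
    destruct (HR _ _ HRv (App (Var (S y)) (Var 0))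
                 (conj (rt_refl _ _ _) (irr_irreducible _ Hirr0))) as [e1 [[He1 He1i] Hnf]].
    destruct (nf_var_app_inv _ _ _ Hnf) as [E1 [w1 [-> [HE1 [HrE1 [Hw1 Hrw1]]]]]].
    destruct (steps_nsteps _ _ He1) as [n' Hn'].
    apply (E_rsteps _ _ _ _ _ (nsteps_subst _ _ _ _ (vsub_scons _ _ Hp1 Hs1) Hn')).
    rewrite plug_subst; simpl.
    assert (Hw : V j p0 (subst (scons p1 s1) w1)).
    { change p0 with (subst (scons p0 s0) (Var 0)).
      apply (IHk j Hj); [intros; apply IHM; lia | simpl; auto | auto | exact Hrw1 | exact Hs']. }
    pose proof (Hs y) as Hy. apply V_unfold in Hy. destruct Hy as [_ [_ Hy]].
    pose proof (Hy j _ _ Hj Hw) as HE.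
    pose proof (E_ctx_pure j _ _ EHole (esubst (scons p1 s1) E1) HE) as HE'.
    simpl in HE'. apply HE'.
    + intros i w0' w1' Hi Hw'. simpl.
      change w0' with (subst (scons w0' (scons p0 s0)) (Var 0)).
      rewrite <- subst_scons_pf.
      apply IHM; [lia| |].
      * exact HrE1.
      * apply Vsub_scons; auto. eapply Vsub_anti; eauto.
    + split; simpl; auto.
    + apply pure_esubst; auto. apply vsub_scons; auto.
  -
    change (reduct (subst s0 (Lam a0)) p0) with (subst1 p0 (subst (up s0) a0)).
    rewrite subst1_up. change a0 with (app_fresh (Lam a0)) at 1.
    apply IHM; auto.
Qed.

Lemma rf_pure_false : forall F t, ectx_pure F -> ~ is_val t -> (forall a, t <> Reset a) -> ~ rf (plug F t).
Proof.
  intros F t [HF HF'] Hv Hr [H | [a H]]; destruct F; simpl in *; try contradiction.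
  - eapply Hr; eauto.
  - discriminate.
  - discriminate.
Qed.

Lemma rf_ctx : forall E G x w, rf (plug (ecomp E (EReset G)) (App (Var x) w)) -> rf (plug_fresh E).
Proof.
  intros E G x w H. destruct E; simpl in *.
  - left; simpl; auto.
  - destruct H as [H | [a H]]; [contradiction | discriminate].
  - destruct H as [H | [a H]]; [contradiction | discriminate].
  - right; eexists; reflexivity.
Qed.

Lemma plug_reset_ecomp : forall N F t, plug N (Reset (plug F t)) = plug (ecomp N (EReset F)) t.
Proof. intros; rewrite plug_ecomp; reflexivity. Qed.

Lemma MAIN_all : forall (R : term -> term -> Prop), nf_simulation R ->
  forall k, MAINk R k /\ MAINRk R k.
Proof.
  intros R HR k. induction k as [k IH] using (well_founded_induction lt_wf).
  assert (IHM : forall j, j < k -> MAINk R j) by (intros; apply IH; auto).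
  assert (IHR : forall j, j < k -> MAINRk R j) by (intros; apply IH; auto).
  assert (HVAL : forall j, j <= k -> VALk R j).
  { intros j Hj; apply VAL_all; auto. intros; apply IHM; lia. }
  split.
  - intros u0 u1 s0 s1 HRu Hs j Hj.
    destruct (Vsub_vsub _ _ _ Hs) as [Hs0 Hs1]. split.
    + intros F0 F1 HT. destruct HT as [HF0 [HF1 HT']].
      apply (core R HR k IHM IHR HVAL (fun _ => True) ltac:(auto) s0 s1 Hs j F0 F1 Hj
               (proj1 HF0) (proj1 HF1)); auto.
      * intros G0 G1 c0 c1 HG0 HG1 _ _ _. rewrite !plug_subst; simpl. rewrite <- !plug_ecomp.
        apply Obs_cs; eexists; eexists; split; try reflexivity; apply pure_ecomp; auto; apply pure_esubst; auto.
      * intros E0 E1 x w0 HE0 HE1 Hr _ l' Hl'. apply Ctx_E_TK. apply TKcomp.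
        -- eapply TK_anti; [|split; [exact HF0| split; [exact HF1| exact HT']]]; lia.
        -- apply (GE_of_MAIN R); [intros; apply IHM; lia | exact Hr | eapply Vsub_anti; [|eauto]; lia].
        -- apply pure_esubst; auto.
        -- apply pure_esubst; auto.
      * intros E0' E1' G0 x w0 HE0 HE1 Hr _ l' Hl'. apply VK_from_CtxE.
        -- apply Ctx_E_TK. eapply TK_anti; [|split; [exact HF0| split; [exact HF1| exact HT']]]; lia.
        -- apply (GE_of_MAIN R); [intros; apply IHM; lia | exact Hr | eapply Vsub_anti; [|eauto]; lia].
        -- apply ok_esubst; auto.
        -- apply ok_esubst; auto.
    + intros N0 N1 F0 F1 HN HP. rewrite !plug_reset_ecomp.
      destruct (VK_comp_reset _ _ _ _ _ HN HP) as [HC0 [HC1 HC]].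
      destruct (PC_pure _ _ _ HP) as [HF0 HF1]. destruct (VK_ok _ _ _ HN) as [HN0 HN1].
      apply (core R HR k IHM IHR HVAL (fun _ => True) ltac:(auto) s0 s1 Hs j _ _ Hj HC0 HC1); auto.
      * intros G0 G1 c0 c1 HG0 HG1 HrG Hrc _. rewrite <- !plug_reset_ecomp, !plug_subst; simpl.
        rewrite <- !plug_ecomp.
        assert (HFG0 : ectx_pure (ecomp F0 (esubst s0 G0))) by (apply pure_ecomp; auto; apply pure_esubst; auto).
        assert (HFG1 : ectx_pure (ecomp F1 (esubst s1 G1))) by (apply pure_ecomp; auto; apply pure_esubst; auto).
        eapply Obs_lstep0.
        { apply sstep_plug; auto. apply ss_shift; auto. }
        intros l'' ->.
        eapply Obs_rsteps. { apply nsteps_one. apply sstep_plug; auto. apply ss_shift; auto. }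
        rewrite !subst1_up.
        assert (HER : ER l'' (subst (scons (Lam (Reset (plug_fresh (ecomp F0 (esubst s0 G0))))) s0) (Reset c0))
                           (subst (scons (Lam (Reset (plug_fresh (ecomp F1 (esubst s1 G1))))) s1) (Reset c1))).
        { apply IHR; [lia | exact Hrc | right; eauto |].
          apply Vsub_scons; [|eapply Vsub_anti; [|eauto]; lia].
          apply PC_kappa. apply PCcomp; auto.
          - eapply PC_anti; [|eauto]; lia.
          - apply (GE_of_MAIN R); [intros; apply IHM; lia | exact HrG | eapply Vsub_anti; [|eauto]; lia].
          - apply pure_esubst; auto.
          - apply pure_esubst; auto. }
        simpl in HER. apply HER; auto. eapply VK_anti; [|eauto]; lia.
      * intros E0 E1 x w0 HE0 HE1 Hr _ l' Hl'. rewrite !ecomp_assoc; simpl. apply Ctx_E_B.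
        -- eapply VK_anti; [|eauto]; lia.
        -- apply PCcomp.
           ++ eapply PC_anti; [|eauto]; lia.
           ++ apply (GE_of_MAIN R); [intros; apply IHM; lia | exact Hr | eapply Vsub_anti; [|eauto]; lia].
           ++ apply pure_esubst; auto.
           ++ apply pure_esubst; auto.
      * intros E0' E1' G0 x w0 HE0 HE1 Hr _ l' Hl'. apply VK_from_CtxE.
        -- apply Ctx_E_B; [apply (VK_anti j l'); [lia|exact HN] | apply (PC_anti j l'); [lia|exact HP]].
        -- apply (GE_of_MAIN R); [intros; apply IHM; lia | exact Hr | eapply Vsub_anti; [|eauto]; lia].
        -- apply ok_esubst; auto.
        -- apply ok_esubst; auto.
  - intros u0 u1 s0 s1 HRu Hrf Hs j N0 N1 Hj HN.
    destruct (Vsub_vsub _ _ _ Hs) as [Hs0 Hs1].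
    destruct HN as [HN0 [HN1 HNv]].
    apply (core R HR k IHM IHR HVAL rf rf_steps s0 s1 Hs j N0 N1 ltac:(lia) HN0 HN1); auto.
    + intros G0 G1 c0 c1 HG0 HG1 _ _ Hrf'. exfalso; eapply rf_pure_false; [exact HG0 | | | exact Hrf'].
      * simpl; auto.
      * intros a Ha; discriminate.
    + intros E0 E1 x w0 HE0 HE1 _ Hrf' l' Hl'. exfalso; eapply rf_pure_false; [exact HE0 | | | exact Hrf'].
      * simpl; auto.
      * intros a Ha; discriminate.
    + intros E0' E1' G0 x w0 HE0 HE1 Hr Hrf' l' Hl'. apply VK_from_CtxER.
      * apply Ctx_ER_VK. split; auto; split; auto. intros; apply HNv; auto; lia.
      * apply (GER_of_MAINR R); [intros; apply IHR; lia | exact Hr | eapply rf_ctx; eauto | eapply Vsub_anti; [|eauto]; lia].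
      * apply ok_esubst; auto.
      * apply ok_esubst; auto.
Qed.

Lemma V_var : forall k n, V k (Var n) (Var n).
Proof.
  intros k n. apply V_unfold; split; [simpl; auto|]; split; [simpl; auto|].
  intros j p0 p1 Hj Hp. destruct (V_val _ _ _ Hp) as [Hp0 Hp1]. simpl.
  intros j' Hj'; split.
  - intros F0 F1 [HF0 _]. apply Obs_open; auto. apply HF0.
  - intros N0 N1 F0 F1 HN HP. rewrite plug_reset_ecomp. apply Obs_open; auto.
    apply ok_ecomp; [apply HN|]. simpl. apply HP.
Qed.

Lemma approx_of_sim : forall (R : term -> term -> Prop) t0 t1, nf_simulation R -> R t0 t1 -> ctx_approx t0 t1.
Proof.
  intros R t0 t1 HR HRt C _ _.
  assert (HL : Lo (cplug C t0) (cplug C t1)).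
  { apply Lo_ctx. intros k s0 s1 Hs. apply (proj1 (MAIN_all R HR k)); auto. }
  assert (HO : forall k, Obs k (cplug C t0) (cplug C t1)).
  { intros k. assert (HE := HL k Var Var (fun n => V_var k n)). rewrite !subst_id in HE.
    exact (proj1 (HE k (le_n _)) EHole EHole (TK_hole k)). }
  split.
  - intros [v0 [[Hst Hirr] Hv]]. destruct (steps_nsteps _ _ Hst) as [i Hi].
    destruct (HO i i v0 (le_n _) Hi (irreducible_irr _ Hirr) (or_introl Hv)) as [n1 [i1 [A [B [D _]]]]].
    exists n1; split; [split; [eapply nsteps_steps; eauto | apply irr_irreducible; auto] | auto].
  - intros [v0 [[Hst Hirr] Hv]]. destruct (steps_nsteps _ _ Hst) as [i Hi].
    destruct (HO i i v0 (le_n _) Hi (irreducible_irr _ Hirr) (or_intror Hv)) as [n1 [i1 [A [B [_ D]]]]].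
    exists n1; split; [split; [eapply nsteps_steps; eauto | apply irr_irreducible; auto] | auto].
Qed.

Theorem theorem1 : forall t0 t1 : term, nf_bisim t0 t1 -> ctx_equiv t0 t1.
Proof.
  intros t0 t1 [R [[H1 H2] HR]]. split.
  - apply (approx_of_sim R); auto.
  - apply (approx_of_sim (fun a b => R b a)); auto.
Qed.
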